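(* Let $G$ be a group, $\mathbb{F}$ a field, and $\alpha,\beta$ non-zero elements of $\mathbb{F}[G]$ with $|supp(\alpha)|=n$ and $\alpha\beta=0$. Then every vertex of $Z(\alpha,\beta)$ has degree in $\{n,n+1,\dots,n(n-1)\}$. Moreover, if $\mathbb{F}=\mathbb{F}_2$, then the degrees of all vertices of $Z(\alpha,\beta)$ are even when $n$ is even and odd when $n$ is odd.
   Context: $supp(\gamma)=\{x\in G:\gamma_x\ne0\}$. The zero-divisor graph $Z(\alpha,\beta)$ (for $\alpha\beta=0$) is the multigraph with vertex set $supp(\beta)$ whose edges are the sets $\{(h,h',g,g'),(h',h,g',g)\}$ with $h,h'\in supp(\alpha)$, $g,g'\in supp(\beta)$, $g\ne g'$, $hg=h'g'$; such an edge joins $g$ and $g'$. The degree of a vertex is the number of edges incident to it. *)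

(* Defs.v *)
From HB Require Import structures.
From mathcomp Require Import all_boot all_order all_algebra.
From mathcomp Require Import finmap.
Set Implicit Arguments. Unset Strict Implicit. Unset Printing Implicit Defensive.
Import Order.TTheory GRing.Theory Num.Theory.
Local Open Scope ring_scope.
Local Open Scope fset_scope.

Definition is_group (G : Type) (mul : G -> G -> G) (one : G) (inv : G -> G) : Prop :=
  [/\ forall x y z, mul x (mul y z) = mul (mul x y) z,
      forall x, mul one x = x,
      forall x, mul x one = x,
      forall x, mul (inv x) x = one &
      forall x, mul x (inv x) = one].

Notation grpalg G F := {fsfun G -> F with 0%R}.

Section ZeroDivisorGraph.
Variables (G : choiceType) (F : fieldType) (mul : G -> G -> G).

Definition supp (gamma : grpalg G F) : {fset G} := finsupp gamma.

(* coefficient of x in the product alpha * beta in F[G] *)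
Definition gaprod (alpha beta : grpalg G F) (x : G) : F :=
  \sum_(h <- supp alpha) \sum_(g <- supp beta | mul h g == x) alpha h * beta g.

Definition tup := (G * G * G * G)%type.

Definition swap_tup (t : tup) : tup :=
  let: (h, h', g, g') := t in (h', h, g', g).

Definition zd_tuples (alpha beta : grpalg G F) : {fset tup} :=
  [fset t in [seq (a.1.1, a.1.2, a.2.1, a.2.2) |
                a <- [seq (p, q) | p <- [seq (h, h') | h <- supp alpha, h' <- supp alpha],
                                   q <- [seq (g, g') | g <- supp beta, g' <- supp beta]]]
     | (t.1.2 != t.2) && (mul t.1.1.1 t.1.2 == mul t.1.1.2 t.2)].

Definition zd_edges (alpha beta : grpalg G F) : {fset {fset tup}} :=
  [fset [fset t; swap_tup t] | t in zd_tuples alpha beta].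

(* an edge {(h,h',g,g'),(h',h,g',g)} joins g and g' *)
Definition zd_incident (e : {fset tup}) (v : G) : bool :=
  [exists t : e, ((val t).1.2 == v) || ((val t).2 == v)].

Definition zd_degree (alpha beta : grpalg G F) (v : G) : nat :=
  #|` [fset e in zd_edges alpha beta | zd_incident e v]|.

End ZeroDivisorGraph.

(* Main.v *)
Require Import Defs.
From HB Require Import structures.
From mathcomp Require Import all_boot all_order all_algebra.
From mathcomp Require Import finmap.
Import GRing.Theory.
Local Open Scope ring_scope.
Local Open Scope fset_scope.

Lemma in_zd_tuples (G : choiceType) (F : fieldType) (mul : G -> G -> G) (alpha beta : grpalg G F) (t : tup G) :
  (t \in zd_tuples mul alpha beta) = [&& t.1.1.1 \in supp alpha, t.1.1.2 \in supp alpha,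
     t.1.2 \in supp beta, t.2 \in supp beta, t.1.2 != t.2 & mul t.1.1.1 t.1.2 == mul t.1.1.2 t.2].
Proof.
rewrite /zd_tuples inE /=.
case: t => [[[h h'] g] g'] /=.
set s := [seq _ | a <- _].
have M : ((h,h',g,g') \in s) = [&& h \in supp alpha, h' \in supp alpha, g \in supp beta & g' \in supp beta].
  apply/idP/idP.
  - case/mapP=> [[[a1 a2] [b1 b2]]] Hx [-> -> -> ->].
    case/allpairsP: Hx => [[[x1 x2] [y1 y2]]] /= [].
    case/allpairsP=> [[c1 c2]] /= [H1 H2 [-> ->]].
    case/allpairsP=> [[d1 d2]] /= [H3 H4 [-> ->]] [-> -> -> ->].
    by rewrite H1 H2 H3 H4.
  - case/and4P=> H1 H2 H3 H4; apply/mapP; exists ((h, h'), (g, g')) => //.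
    apply/allpairsP; exists ((h, h'), (g, g')); split => //; apply/allpairsP.
    + by exists (h, h').
    + by exists (g, g').
rewrite inE /= M.
by case: (h \in _); case: (h' \in _); case: (g \in _); case: (g' \in _).
Qed.


Lemma swapK (G : choiceType) (t : tup G) : swap_tup (swap_tup t) = t.
Proof. by case: t => [[[h h'] g] g']. Qed.

Lemma swap_in (G : choiceType) (F : fieldType) (mul : G -> G -> G) (alpha beta : grpalg G F) (t : tup G) :
  t \in zd_tuples mul alpha beta -> swap_tup t \in zd_tuples mul alpha beta.
Proof.
case: t => [[[h h'] g] g']; rewrite !in_zd_tuples /=.
case/and5P => -> -> -> -> /andP [H1 /eqP H2] /=.
by rewrite eq_sym H1 H2 eqxx.
Qed.

Lemma incP (G : choiceType) (e : {fset tup G}) v :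
  reflect (exists2 t, t \in e & (t.1.2 == v) || (t.2 == v)) (zd_incident e v).
Proof.
apply: (iffP existsP) => [[t Ht] | [t te Ht]].
- by exists (val t) => //; exact: fsvalP.
- by exists [` te].
Qed.

Definition Tv {G : choiceType} {F : fieldType} (mul : G -> G -> G) (alpha beta : grpalg G F) v :=
  [fset t in zd_tuples mul alpha beta | t.1.2 == v].

Lemma inTv (G : choiceType) (F : fieldType) (mul : G -> G -> G) (alpha beta : grpalg G F) v t :
  (t \in Tv mul alpha beta v) = (t \in zd_tuples mul alpha beta) && (t.1.2 == v).
Proof. by rewrite inE. Qed.

Lemma deg_eq (G : choiceType) (F : fieldType) (mul : G -> G -> G) (alpha beta : grpalg G F) v :
  zd_degree mul alpha beta v = #|` Tv mul alpha beta v|.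
Proof.
rewrite /zd_degree.
have -> : [fset e in zd_edges mul alpha beta | zd_incident e v] =
   (fun t => [fset t; swap_tup t]) @` Tv mul alpha beta v.
  apply/fsetP => e; rewrite inE; apply/andP/idP.
  - case=> /imfsetP [t /= Ht ->] /incP [u].
    rewrite !inE => /orP [] /eqP ->.
    + case/orP => /eqP Hv.
      * by apply/imfsetP; exists t => //; rewrite inTv Ht Hv eqxx.
      * apply/imfsetP; exists (swap_tup t); last by rewrite swapK fsetUC.
        rewrite inTv swap_in //=; case: t Ht Hv => [[[h h'] g] g'] /= _ ->; exact: eqxx.
    + case/orP => /eqP Hv.
      * apply/imfsetP; exists (swap_tup t); last by rewrite swapK fsetUC.
        by rewrite inTv swap_in //= Hv eqxx.
      * apply/imfsetP; exists t => //; rewrite inTv Ht /=.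
        by move: Hv; case: t {Ht} => [[[h h'] g] g'] /= ->.
  - case/imfsetP => t /=; rewrite inTv => /andP [Ht Hv] ->; split.
    + by apply/imfsetP; exists t.
    + by apply/incP; exists t; rewrite ?inE ?eqxx ?Hv.
rewrite card_in_imfset //.
move=> t1 t2; rewrite !inTv => /andP [H1 /eqP V1] /andP [H2 /eqP V2] E.
have : t1 \in [fset t2; swap_tup t2] by rewrite -E !inE eqxx.
rewrite !inE => /orP [/eqP // | /eqP E1].
move: H2 V2 V1; rewrite E1 in_zd_tuples.
case: t2 {E E1 H1} => [[[h h'] g] g'] /= /and5P [_ _ _ _ /andP [Hne _]] Eg E'.
by rewrite Eg E' eqxx in Hne.
Qed.


Lemma sumb_count (T : eqType) (r : seq T) (P : pred T) :
  (\sum_(i <- r) (P i : nat) = count P r)%N.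
Proof. by elim: r => [|x r IH]; rewrite ?big_nil ?big_cons ?IH //. Qed.

Lemma mulKg_ {G : Type} {mul : G -> G -> G} {one inv} :
  is_group mul one inv -> forall a b, mul (inv a) (mul a b) = b.
Proof. by case=> A L _ I _ a b; rewrite A I L. Qed.

Lemma mulgK_ {G : Type} {mul : G -> G -> G} {one inv} :
  is_group mul one inv -> forall a b, mul (mul b a) (inv a) = b.
Proof. by case=> A _ R _ I a b; rewrite -A I R. Qed.

Lemma mulVKg_ {G : Type} {mul : G -> G -> G} {one inv} :
  is_group mul one inv -> forall a b, mul a (mul (inv a) b) = b.
Proof. by case=> A L _ _ I a b; rewrite A I L. Qed.

Definition cnt {G : choiceType} {F : fieldType} (mul : G -> G -> G) (inv : G -> G)
  (alpha beta : grpalg G F) v h :=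
  count (fun h' => (h' != h) && (mul (inv h') (mul h v) \in supp beta)) (supp alpha).

Lemma T_card (G : choiceType) (mul : G -> G -> G) (one : G) (inv : G -> G)
    (F : fieldType) (alpha beta : grpalg G F) v :
  is_group mul one inv -> v \in supp beta ->
  #|` Tv mul alpha beta v| = (\sum_(h <- supp alpha) cnt mul inv alpha beta v h)%N.
Proof.
move=> grp vB.
have uA : uniq (supp alpha) by exact: fset_uniq.
rewrite card_fset_sum1.
transitivity (\sum_(t <- Tv mul alpha beta v) \sum_(h <- supp alpha) \sum_(h' <- supp alpha)
   ((t.1.1.1 == h) * (t.1.1.2 == h')))%N.
  apply: eq_big_seq => t; rewrite inTv in_zd_tuples => /andP [/and3P [H1 H2 _] _].
  under eq_bigr do rewrite -big_distrr /=.
  rewrite -big_distrl /= !sumb_count.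
  have E : forall x, x \in supp alpha -> count (fun h => x == h) (supp alpha) = 1%N.
    move=> x xA; rewrite -[1%N]/(nat_of_bool true) -xA -(count_uniq_mem x uA).
    by apply: eq_count => y; rewrite /= eq_sym.
  by rewrite !E.
rewrite exchange_big /=; apply: eq_big_seq => h hA.
rewrite exchange_big /= /cnt -sumb_count; apply: eq_big_seq => h' h'A.
set g0 := mul (inv h') (mul h v).
have -> : (\sum_(i <- Tv mul alpha beta v) ((i.1.1.1 == h) * (i.1.1.2 == h')))%N
          = count (pred1 (h, h', v, g0)) (Tv mul alpha beta v).
  rewrite -sumb_count; apply: eq_big_seq => t.
  rewrite inTv in_zd_tuples; case: t => [[[a b] g] g'] /=.
  case/andP=> /and5P [_ _ _ _ /andP [_ /eqP E]] /eqP Eg; subst g.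
  rewrite mulnb; congr (nat_of_bool _).
  apply/andP/eqP => [[/eqP Ea /eqP Eb] | E2]; last by case: E2 => -> -> *; rewrite !eqxx.
  by rewrite /g0 -Ea -Eb E (mulKg_ grp).
rewrite (count_uniq_mem _ (fset_uniq _)) inTv in_zd_tuples /= hA h'A vB eqxx /=.
have -> : mul h' g0 = mul h v by rewrite /g0 (mulVKg_ grp).
rewrite eqxx /= !andbT andbC; congr (_ && _).
apply/idP/idP => H; apply: contraNneq H.
- by move=> E; rewrite /g0 E (mulKg_ grp).
- move=> E; apply/eqP.
  have M : mul h' v = mul h v by rewrite {1}E /g0 (mulVKg_ grp).
  by rewrite -[h'](mulgK_ grp v) M (mulgK_ grp).
Qed.


Lemma sum_le_seq (T : eqType) (r : seq T) (f g : T -> nat) :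
  (forall x, x \in r -> f x <= g x)%N -> (\sum_(x <- r) f x <= \sum_(x <- r) g x)%N.
Proof.
elim: r => [|y r IH] H; rewrite ?big_nil // !big_cons.
apply: leq_add; first by apply: H; rewrite inE eqxx.
by apply: IH => x xr; apply: H; rewrite inE xr orbT.
Qed.

Lemma sum_const_seq (T : eqType) (r : seq T) (c : nat) :
  (\sum_(x <- r) c = size r * c)%N.
Proof. by elim: r => [|y r IH]; rewrite ?big_nil ?big_cons ?IH ?mulSn. Qed.

Lemma odd_sum_seq (T : eqType) (r : seq T) (f : T -> nat) :
  (forall x, x \in r -> odd (f x)) -> odd (\sum_(x <- r) f x) = odd (size r).
Proof.
elim: r => [|y r IH] H; rewrite ?big_nil // big_cons oddD H ?inE ?eqxx // IH //.
by move=> x xr; apply: H; rewrite inE xr orbT.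
Qed.

Lemma inner_eq {G : choiceType} {mul : G -> G -> G} {one : G} {inv : G -> G}
    {F : fieldType} {B : seq G} {f : G -> F} {h x} :
  is_group mul one inv -> uniq B ->
  \sum_(g <- B | mul h g == x) f g =
  if mul (inv h) x \in B then f (mul (inv h) x) else 0.
Proof.
move=> grp uB.
rewrite (eq_bigl (pred1 (mul (inv h) x))); last first.
  move=> g /=; apply/eqP/eqP => [<- | ->]; by rewrite ?(mulKg_ grp) ?(mulVKg_ grp).
rewrite -big_filter; case: ifP => H.
  by rewrite filter_pred1_uniq // big_seq1.
rewrite (_ : filter _ _ = [::]) ?big_nil //.
apply/eqP; rewrite -size_eq0 size_filter -leqn0 leqNgt -has_count.
by apply/hasP => [[y yB /eqP Ey]]; rewrite -Ey yB in H.
Qed.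

Lemma gaprod_split (G : choiceType) (mul : G -> G -> G) (one : G) (inv : G -> G)
    (F : fieldType) (alpha beta : grpalg G F) h v :
  is_group mul one inv -> h \in supp alpha -> v \in supp beta ->
  gaprod mul alpha beta (mul h v) = (alpha h * beta v +
   \sum_(h' <- supp alpha | h' != h)
      (if mul (inv h') (mul h v) \in supp beta then
         alpha h' * beta (mul (inv h') (mul h v)) else 0))%R.
Proof.
move=> grp hA vB; rewrite /gaprod.
under eq_bigr do rewrite (inner_eq grp (fset_uniq _)).
by rewrite (bigD1_seq h) ?fset_uniq //= (mulKg_ grp) vB.
Qed.
Arguments gaprod_split {G mul one inv F alpha beta h v}.


Lemma supp_neq0 (G : choiceType) (F : fieldType) (gamma : grpalg G F) x :
  x \in supp gamma -> gamma x != 0.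
Proof. by rewrite /supp mem_finsupp. Qed.
Arguments supp_neq0 {G F gamma x}.

Lemma cnt_pos (G : choiceType) (mul : G -> G -> G) (one : G) (inv : G -> G)
    (F : fieldType) (alpha beta : grpalg G F) h v :
  is_group mul one inv -> (forall x, gaprod mul alpha beta x = 0) ->
  h \in supp alpha -> v \in supp beta -> (0 < cnt mul inv alpha beta v h)%N.
Proof.
move=> grp Z hA vB; rewrite /cnt -has_count; apply: contraT => /hasPn H.
have := Z (mul h v); rewrite (gaprod_split grp hA vB) big1_seq ?addr0.
  by move/eqP; rewrite mulf_eq0 (negbTE (supp_neq0 hA)) (negbTE (supp_neq0 vB)).
move=> h' /andP [Hne h'A]; case: ifP => // Hin.
by have := H h' h'A; rewrite Hne Hin.
Qed.

Lemma cnt_le (G : choiceType) (mul : G -> G -> G) (inv : G -> G)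
    (F : fieldType) (alpha beta : grpalg G F) h v :
  h \in supp alpha -> (cnt mul inv alpha beta v h <= #|` supp alpha| - 1)%N.
Proof.
move=> hA; rewrite /cnt.
apply: leq_trans (sub_count (a2 := predC (pred1 h)) _ _) _.
  by move=> x /andP [].
rewrite -(count_predC (pred1 h)) count_uniq_mem ?fset_uniq // hA.
by rewrite addnC addnK.
Qed.

Lemma natr_odd (F : fieldType) :
  (forall c : F, c = 0 \/ c = 1) -> forall k, (k%:R : F) = (odd k)%:R.
Proof.
move=> F2.
have two : ((1 + 1)%R : F) = 0.
  case: (F2 (1 + 1)%R) => // E; exfalso.
  have : (1 : F) = 0 by apply: (@addrI _ 1); rewrite addr0.
  by apply/eqP; rewrite oner_eq0.
elim=> [|k IH] //; rewrite -addn1 natrD IH addn1 /=.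
by case: (odd k); rewrite /= ?two ?add0r.
Qed.

Lemma cnt_odd (G : choiceType) (mul : G -> G -> G) (one : G) (inv : G -> G)
    (F : fieldType) (alpha beta : grpalg G F) h v :
  is_group mul one inv -> (forall x, gaprod mul alpha beta x = 0) ->
  (forall c : F, c = 0 \/ c = 1) ->
  h \in supp alpha -> v \in supp beta -> odd (cnt mul inv alpha beta v h).
Proof.
move=> grp Z F2 hA vB.
have one_of : forall (gamma : grpalg G F) x, x \in supp gamma -> gamma x = 1.
  move=> gamma x /supp_neq0; case: (F2 (gamma x)) => -> //; by rewrite eqxx.
have := Z (mul h v); rewrite (gaprod_split grp hA vB) !one_of // mul1r.
rewrite big_seq_cond (eq_bigr (fun h' => ((mul (inv h') (mul h v) \in supp beta) : nat)%:R)); last first.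
  by move=> h' /andP [h'A _]; case: ifP => H; rewrite ?one_of ?mul1r.
rewrite -big_seq_cond -natr_sum big_mkcond /=.
rewrite (eq_bigr (fun h' => nat_of_bool ((h' != h) && (mul (inv h') (mul h v) \in supp beta)))); last first.
  by move=> h' _; case: (h' != h).
rewrite sumb_count -/(cnt mul inv alpha beta v h) nat1r natr_odd //.
rewrite /=; case: (odd (cnt _ _ _ _ _ _)) => //=. by move=> E; move: (oner_neq0 F); rewrite -[X in X != _]mulr1n E eqxx.
Qed.

Arguments T_card {G mul one inv F alpha beta v}.
Arguments cnt_pos {G mul one inv F alpha beta h v}.
Arguments cnt_odd {G mul one inv F alpha beta h v}.

Theorem mainTheorem8 (G : choiceType) (mul : G -> G -> G) (one : G) (inv : G -> G)
    (F : fieldType) (alpha beta : grpalg G F) (n : nat) :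
  is_group mul one inv ->
  (exists x, alpha x != 0) ->
  (exists x, beta x != 0) ->
  #|` supp alpha| = n ->
  (forall x, gaprod mul alpha beta x = 0) ->
  (forall v, v \in supp beta ->
     (n <= zd_degree mul alpha beta v <= n * (n - 1))%N) /\
  ((forall c : F, c = 0 \/ c = 1) ->
     forall v, v \in supp beta ->
       odd (zd_degree mul alpha beta v) = odd n).
Proof.
move=> grp _ _ nA Z; split.
- move=> v vB; rewrite deg_eq (T_card grp vB); apply/andP; split.
  + rewrite -nA card_fset_sum1; apply: sum_le_seq => h hA.
    exact: (cnt_pos grp Z hA vB).
  + apply: (@leq_trans (\sum_(h <- supp alpha) (n - 1))%N).
      by apply: sum_le_seq => h hA; rewrite -nA; apply: cnt_le.
    by rewrite sum_const_seq nA.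
- move=> F2 v vB; rewrite deg_eq (T_card grp vB) -nA.
  by apply: odd_sum_seq => h hA; apply: (cnt_odd grp Z F2 hA vB).
Qed.
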